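(* Let $S$ be a simple $(l,r)$-framed algebra, $D_S=\{d:\bigoplus_cS_{(d,c)}\ne0\}$, and for $d\in\mathbb{Z}_2^{l+r}$ let $A_S(d)=\bigoplus_{c}S_{(d,c)}$. Let $d\in D_S$ and let $N\subset A_S(d)$ be an $\mathrm{IS}^{(l,r)}$-graded subspace with $a\cdot n\in N$ for all $a\in A_S(0)$, $n\in N$. Then $N=0$ or $N=A_S(d)$.
   Context: Let $\mathrm{IS}=\{0,\frac12,\frac1{16}\}$ with fusion rule $\star$ (values are subsets): $0\star h=h\star0=\{h\}$, $\frac12\star\frac12=\{0\}$, $\frac12\star\frac1{16}=\frac1{16}\star\frac12=\{\frac1{16}\}$, $\frac1{16}\star\frac1{16}=\{0,\frac12\}$; $A(h_0,h_1,h_2,h_3)=\{h: h\in h_2\star h_3,\ h_0\in h_1\star h\}$. For $h\in A(h_0,h_1,h_2,h_3)$, $h'\in A(h_0,h_2,h_1,h_3)$ define $B^{h,h'}_{h_0,h_1,h_2,h_3}$: $B_{*,0,*,*}=B_{*,*,0,*}=1$; $B_{*,\frac12,\frac12,*}=-1$; $B_{a,\frac12,\frac1{16},a'}=B_{a,\frac1{16},\frac12,a'}=i$ if $a$ or $a'$ is $\frac12$, else $-i$; $B^{b,b'}_{a,\frac1{16},\frac1{16},a'}=e^{-\pi i/8}\cdot\{1$ if $a,a'\ne\frac1{16},a=a'$; $i$ if $a,a'\neq\frac1{16},a\ne a'$; $\frac{1+i}2$ if $a=a'=\frac1{16},b=b'$; $\frac{1-i}2$ if $a=a'=\frac1{16},b\neq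 b'\}$. $\mathrm{IS}^{(l,r)}=\mathrm{IS}^l\times\mathrm{IS}^r$, $\lambda=(h_1,..,h_l,\bar h_1,..,\bar h_r)$, $s(\lambda)=\sum h_i-\sum\bar h_j$; $\star$, $A$ componentwise; $B^{\lambda,\lambda'}_{\lambda^0,\dots,\lambda^3}=\prod_{i\le l}B^{h_i,h'_i}_{h^0_i,\dots,h^3_i}\prod_{j\le r}\overline{B^{\bar h_j,\bar h'_j}_{\bar h^0_j,\dots,\bar h^3_j}}$. An $(l,r)$-framed algebra: finite-dimensional $\mathrm{IS}^{(l,r)}$-graded $S=\bigoplus S_\lambda$ over $\mathbb{C}$ with bilinear product, nonzero $1\in S_0$, $a\cdot_\lambda b$ the $S_\lambda$-component of $a\cdot b$, satisfying (FA1) $S_\lambda=0$ unless $s(\lambda)\in\mathbb{Z}$; (FA2) $S_0=\mathbb{C}1$, $1$ a two-sided unit; (FA3) $S_{\lambda^1}\cdot S_{\lambda^2}\subset\bigoplus_{\lambda\in\lambda^1\star\lambda^2}S_\lambda$; (FA4) $a_2\cdot_{\lambda^0}(a_1\cdot_{\lambda'}a_3)=\sum_{\lambda\in A(\lambda^0,\lambda^1,\lambda^2,\lambda^3)}B^{\lambda,\lambda'}_{\lambda^0,\lambda^1,\lambda^2,\lambda^3}a_1\cdot_{\lambda^0}(a_2\cdot_\lambda a_3)$ for $a_i\in S_{\lambda^i}$, $\lambda'\in A(\lambda^0,\lambda^2,\lambda^1,\lambda^3)$. Ideal: graded subspace $M$ with $S\cdot M\subset M$; simple: only ideals $0$ and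 $S$. Identify $\mathrm{IS}$ with $\{(d,c)\in\mathbb{Z}_2^2:dc=0\}$ via $0\leftrightarrow(0,0)$, $\frac12\leftrightarrow(0,1)$, $\frac1{16}\leftrightarrow(1,0)$, and componentwise $\mathrm{IS}^{(l,r)}$ with pairs $(d,c)\in(\mathbb{Z}_2^{l+r})^2$, $dc=0$; $S_{(d,c)}$ is the corresponding graded piece. *)

(* Defs.v *)
From HB Require Import structures.
From mathcomp Require Import all_boot all_order all_algebra all_field.
From mathcomp Require Import complex.
From mathcomp Require Import reals trigo.

Set Implicit Arguments.
Unset Strict Implicit.
Unset Printing Implicit Defensive.

Import GRing.Theory Num.Theory ComplexField.
Local Open Scope ring_scope.

Inductive IS := IS0 | IShalf | IS16.

Definition IS_to_ord (h : IS) : 'I_3 :=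
  match h with IS0 => inord 0 | IShalf => inord 1 | IS16 => inord 2 end.
Definition ord_to_IS (k : 'I_3) : IS :=
  match val k with 0 => IS0 | 1 => IShalf | _ => IS16 end.
Lemma IS_to_ordK : cancel IS_to_ord ord_to_IS.
Proof. by case; rewrite /ord_to_IS /= inordK. Qed.
HB.instance Definition _ := Finite.copy IS (can_type IS_to_ordK).

(* 16 * h, as a natural number *)
Definition wt16 (h : IS) : nat :=
  match h with IS0 => 0 | IShalf => 8 | IS16 => 1 end.

(* fusion rule: h \in h1 * h2 *)
Definition starb (h1 h2 h : IS) : bool :=
  match h1, h2 with
  | IS0, _ => h == h2
  | _, IS0 => h == h1
  | IShalf, IShalf => h == IS0
  | IShalf, IS16 | IS16, IShalf => h == IS16
  | IS16, IS16 => (h == IS0) || (h == IShalf)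
  end.

Definition Ab (h0 h1 h2 h3 h : IS) : bool := starb h2 h3 h && starb h1 h h0.

Definition zeta8 (R : realType) : R[i] := (cos (pi / 8) -i* sin (pi / 8))%C.

(* B^{h,h'}_{h0,h1,h2,h3}  (only meaningful for h \in A(h0,h1,h2,h3),
   h' \in A(h0,h2,h1,h3); the value 0 in the (vacuous) remaining
   1/16,1/16 case is an arbitrary filler) *)
Definition Bc (R : realType) (h h' h0 h1 h2 h3 : IS) : R[i] :=
  match h1, h2 with
  | IS0, _ => 1
  | _, IS0 => 1
  | IShalf, IShalf => -1
  | IShalf, IS16 | IS16, IShalf =>
      if (h0 == IShalf) || (h3 == IShalf) then 'i%C else - 'i%C
  | IS16, IS16 =>
      @zeta8 R *
      (if (h0 != IS16) && (h3 != IS16) then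
         (if h0 == h3 then 1 else 'i%C)
       else if (h0 == IS16) && (h3 == IS16) then
         (if h == h' then (1 + 'i%C) / 2 else (1 - 'i%C) / 2)
       else 0)
  end.

Definition grade (l r : nat) := ({ffun 'I_l -> IS} * {ffun 'I_r -> IS})%type.

Definition grade0 (l r : nat) : grade l r := ([ffun=> IS0], [ffun=> IS0]).

(* 16 * s(lambda) *)
Definition s16 (l r : nat) (lam : grade l r) : int :=
  (\sum_(i < l) (wt16 (lam.1 i))%:Z - \sum_(j < r) (wt16 (lam.2 j))%:Z)%R.

Definition starG (l r : nat) (lam1 lam2 lam : grade l r) : bool :=
  [forall i, starb (lam1.1 i) (lam2.1 i) (lam.1 i)] &&
  [forall j, starb (lam1.2 j) (lam2.2 j) (lam.2 j)].

Definition AG (l r : nat) (lam0 lam1 lam2 lam3 lam : grade l r) : bool :=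
  [forall i, Ab (lam0.1 i) (lam1.1 i) (lam2.1 i) (lam3.1 i) (lam.1 i)] &&
  [forall j, Ab (lam0.2 j) (lam1.2 j) (lam2.2 j) (lam3.2 j) (lam.2 j)].

Definition BG (R : realType) (l r : nat) (lam lam' lam0 lam1 lam2 lam3 : grade l r)
  : R[i] :=
  (\prod_(i < l) @Bc R (lam.1 i) (lam'.1 i) (lam0.1 i) (lam1.1 i) (lam2.1 i) (lam3.1 i)) *
  (\prod_(j < r) (@Bc R (lam.2 j) (lam'.2 j) (lam0.2 j) (lam1.2 j) (lam2.2 j) (lam3.2 j))^*).

Definition gcomp (R : realType) (l r : nat) (V : vectType R[i])
  (Sp : grade l r -> {vspace V}) (lam : grade l r) (v : V) : V :=
  sumv_pi (\sum_(mu : grade l r) Sp mu)%VS lam v.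

Record framed_algebra (R : realType) (l r : nat) (V : vectType R[i]) := FramedAlgebra {
  fa_sp : grade l r -> {vspace V};
  fa_one : V;
  fa_mul : V -> V -> V;
  fa_full : (\sum_(lam : grade l r) fa_sp lam)%VS = fullv;
  fa_direct : directv (\sum_(lam : grade l r) fa_sp lam);
  fa_linl : forall b, linear (fun a => fa_mul a b);
  fa_linr : forall a, linear (fa_mul a);
  fa_one_neq0 : fa_one != 0;
  fa_FA1 : forall lam, ~~ (16 %| s16 lam)%Z -> fa_sp lam = 0%VS;
  fa_FA2_span : fa_sp (grade0 l r) = <[fa_one]>%VS;
  fa_FA2_unitl : forall a, fa_mul fa_one a = a;
  fa_FA2_unitr : forall a, fa_mul a fa_one = a;
  fa_FA3 : forall lam1 lam2 a b, a \in fa_sp lam1 -> b \in fa_sp lam2 ->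
    fa_mul a b \in (\sum_(lam | starG lam1 lam2 lam) fa_sp lam)%VS;
  fa_FA4 : forall lam0 lam1 lam2 lam3 lam' a1 a2 a3,
    a1 \in fa_sp lam1 -> a2 \in fa_sp lam2 -> a3 \in fa_sp lam3 ->
    AG lam0 lam2 lam1 lam3 lam' ->
    gcomp fa_sp lam0 (fa_mul a2 (gcomp fa_sp lam' (fa_mul a1 a3))) =
    \sum_(lam | AG lam0 lam1 lam2 lam3 lam)
      @BG R l r lam lam' lam0 lam1 lam2 lam3 *:
        gcomp fa_sp lam0 (fa_mul a1 (gcomp fa_sp lam (fa_mul a2 a3)))
}.

Arguments framed_algebra : clear implicits.
Arguments fa_sp {R l r V}.
Arguments fa_one {R l r V}.
Arguments fa_mul {R l r V}.

Section FramedDefs.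
Variables (R : realType) (l r : nat) (V : vectType R[i]) (S : framed_algebra R l r V).

Definition fa_graded (M : {vspace V}) : Prop :=
  (\sum_(lam : grade l r) (M :&: fa_sp S lam))%VS = M.

Definition fa_ideal (M : {vspace V}) : Prop :=
  fa_graded M /\ (forall a m, m \in M -> fa_mul S a m \in M).

Definition fa_simple : Prop :=
  forall M, fa_ideal M -> M = 0%VS \/ M = fullv.

(* the d-part of a grade, via IS ~ {(d,c) : dc = 0}, 1/16 <-> (1,0) *)
Definition dpart (lam : grade l r) : {ffun 'I_l -> bool} * {ffun 'I_r -> bool} :=
  ([ffun i => lam.1 i == IS16], [ffun j => lam.2 j == IS16]).

Definition d0 : {ffun 'I_l -> bool} * {ffun 'I_r -> bool} :=
  ([ffun=> false], [ffun=> false]).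

Definition A_S (d : {ffun 'I_l -> bool} * {ffun 'I_r -> bool}) : {vspace V} :=
  (\sum_(lam | dpart lam == d) fa_sp S lam)%VS.

Definition in_D_S (d : {ffun 'I_l -> bool} * {ffun 'I_r -> bool}) : Prop :=
  A_S d != 0%VS.

End FramedDefs.

(* Main.v *)
Require Import Defs.
From HB Require Import structures.
From mathcomp Require Import all_boot all_order all_algebra all_field.
From mathcomp Require Import complex.
From mathcomp Require Import reals trigo.
Import GRing.Theory Num.Theory ComplexField.
Local Open Scope ring_scope.
Set Implicit Arguments.
Unset Strict Implicit.

Section Lin.
Variables (K : fieldType) (V : vectType K) (f : V -> V).
Hypothesis hf : linear f.
Lemma lin0 : f 0 = 0.
Proof.
have := hf 1 0 0; rewrite !scale1r addr0 => h.
by apply/(addrI (f 0)); rewrite addr0 -{1}h.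
Qed.
Lemma linD u v : f (u + v) = f u + f v.
Proof. by have := hf 1 u v; rewrite !scale1r. Qed.
Lemma linZ k u : f (k *: u) = k *: f u.
Proof. by have := hf k u 0; rewrite !addr0 lin0 addr0. Qed.
Lemma lin_sum (I : Type) (s : seq I) (P : pred I) (F : I -> V) :
  f (\sum_(i <- s | P i) F i) = \sum_(i <- s | P i) f (F i).
Proof.
elim/big_rec2: _ => [|i y1 y2 _ <-]; first exact: lin0.
exact: linD.
Qed.
End Lin.
Arguments lin0 {K V f}.
Arguments linD {K V f}.
Arguments linZ {K V f}.
Arguments lin_sum {K V f}.

Definition ISb (x y : IS) : bool :=
  match x, y with IS0, IS0 | IShalf, IShalf | IS16, IS16 => true | _, _ => false end.
Lemma eqIS (x y : IS) : (x == y) = ISb x y.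
Proof. by apply/eqP/idP => [->|]; case: x; case: y. Qed.

Lemma AG_starG l r (l0 l1 l2 l3 lam : grade l r) :
  AG l0 l1 l2 l3 lam = starG l2 l3 lam && starG l1 lam l0.
Proof.
rewrite /AG /starG /Ab; apply/andP/andP.
  move=> [/forallP H1 /forallP H2]; split; apply/andP; split; apply/forallP => i.
  - by case/andP: (H1 i).
  - by case/andP: (H2 i).
  - by case/andP: (H1 i).
  - by case/andP: (H2 i).
move=> [/andP[/forallP H1 /forallP H2] /andP[/forallP H3 /forallP H4]].
by split; apply/forallP => i; rewrite ?H1 ?H2 ?H3 ?H4.
Qed.

Lemma starG_r0 l r (lam : grade l r) : starG lam (grade0 l r) lam.
Proof.
rewrite /starG; apply/andP; split; apply/forallP => i; rewrite ffunE.
  by case: (lam.1 i); rewrite /= eqIS.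
by case: (lam.2 i); rewrite /= eqIS.
Qed.

Lemma starG_xor l r (al nu ka : grade l r) :
  starG al nu ka -> dpart ka = dpart nu -> dpart al = d0 l r.
Proof.
move=> /andP[/forallP H1 /forallP H2] [E1 E2].
rewrite /dpart /d0; congr pair; apply/ffunP => i; rewrite !ffunE.
  have := congr1 (fun f : {ffun 'I_l -> bool} => f i) E1; rewrite !ffunE; have := H1 i.
  by case: (al.1 i); case: (nu.1 i); case: (ka.1 i); rewrite /= ?eqIS.
have := congr1 (fun f : {ffun 'I_r -> bool} => f i) E2; rewrite !ffunE; have := H2 i.
by case: (al.2 i); case: (nu.2 i); case: (ka.2 i); rewrite /= ?eqIS.
Qed.

Section Framed.
Variables (R : realType) (l r : nat) (V : vectType R[i]) (S : framed_algebra R l r V).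
Local Notation G := (gcomp (fa_sp S)).
Local Notation mul := (fa_mul S).
Local Notation Sp := (fa_sp S).

Lemma mul0l b : mul 0 b = 0. Proof. exact: (lin0 (fa_linl S b)). Qed.
Lemma mul0r a : mul a 0 = 0. Proof. exact: (lin0 (fa_linr S a)). Qed.
Lemma mulZl k a b : mul (k *: a) b = k *: mul a b. Proof. exact: (linZ (fa_linl S b) k a). Qed.
Lemma mulZr k a b : mul a (k *: b) = k *: mul a b. Proof. exact: (linZ (fa_linr S a) k b). Qed.
Lemma mul_suml (I : Type) (s : seq I) (P : pred I) (F : I -> V) b :
  mul (\sum_(i <- s | P i) F i) b = \sum_(i <- s | P i) mul (F i) b.
Proof. exact: (lin_sum (fa_linl S b) _ s P F). Qed.
Lemma mul_sumr (I : Type) (s : seq I) (P : pred I) (F : I -> V) a :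
  mul a (\sum_(i <- s | P i) F i) = \sum_(i <- s | P i) mul a (F i).
Proof. exact: (lin_sum (fa_linr S a) _ s P F). Qed.

Lemma G_lin lam : linear (G lam).
Proof. by move=> k u v; rewrite /gcomp linearP. Qed.
Lemma G0 lam : G lam 0 = 0. Proof. exact: (lin0 (G_lin lam)). Qed.
Lemma GZ lam k u : G lam (k *: u) = k *: G lam u. Proof. exact: (linZ (G_lin lam)). Qed.
Lemma G_sumv lam (I : Type) (s : seq I) (P : pred I) (F : I -> V) :
  G lam (\sum_(i <- s | P i) F i) = \sum_(i <- s | P i) G lam (F i).
Proof. exact: (lin_sum (G_lin lam) _ s P F). Qed.

Lemma G_mem lam v : G lam v \in Sp lam.
Proof. exact: memv_sum_pi. Qed.

Lemma G_sum v : \sum_lam G lam v = v.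
Proof. by apply: sumv_pi_sum; rewrite fa_full memvf. Qed.

Lemma G_uniq (ws : grade l r -> V) : (forall lam, ws lam \in Sp lam) ->
  forall mu, G mu (\sum_lam ws lam) = ws mu.
Proof.
move=> wsP mu; have /directv_sum_unique H := fa_direct S.
have := H (fun lam => G lam (\sum_lam ws lam)) ws (fun lam _ => G_mem lam _)
  (fun lam _ => wsP lam).
rewrite G_sum eqxx => /esym/forall_inP/(_ mu isT)/eqP; exact.
Qed.

Lemma G_in lam mu v : v \in Sp lam -> G mu v = if mu == lam then v else 0.
Proof.
move=> Hv.
have e : \sum_nu (if nu == lam then v else 0) = v.
  by rewrite -big_mkcond /= big_pred1_eq.
rewrite -{1}e G_uniq // => nu; case: eqP => [->|_] //; exact: mem0v.
Qed.

Lemma G_FA3 mu nu lam a b : a \in Sp mu -> b \in Sp nu -> ~~ starG mu nu lam ->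
  G lam (mul a b) = 0.
Proof.
move=> Ha Hb St; have /memv_sumP [ws wsP ->] := fa_FA3 Ha Hb.
rewrite big_mkcond /= G_uniq ?(negPf St) // => k.
by case: ifP => [/wsP //|_]; exact: mem0v.
Qed.

Lemma G_graded (N : {vspace V}) lam n : fa_graded S N -> n \in N -> G lam n \in N.
Proof.
rewrite /fa_graded => HN; rewrite -{1}HN => /memv_sumP [ws wsP ->].
by rewrite G_uniq => [|k]; have /memv_capP[] := wsP lam isT;
  [|have /memv_capP[] := wsP k isT].
Qed.

Lemma one_mem : fa_one S \in Sp (grade0 l r).
Proof. by rewrite fa_FA2_span memv_line. Qed.

Lemma skew ga nu lam c n : c \in Sp ga -> n \in Sp nu ->
  G lam (mul c n) \in <[G lam (mul n c)]>%VS.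
Proof.
move=> Hc Hn; case St: (starG ga nu lam); last first.
  by rewrite (G_FA3 Hc Hn) ?St // mem0v.
have H := fa_FA4 (lam0:=lam) (lam':=nu) Hn Hc one_mem.
rewrite AG_starG St starG_r0 in H; have {}H := H isT.
rewrite fa_FA2_unitr (G_in _ Hn) eqxx in H; rewrite H.
apply: rpred_sum => k _; apply: memvZ.
rewrite fa_FA2_unitr (G_in _ Hc); case: eqP => _; first exact: memv_line.
by rewrite mul0r G0 mem0v.
Qed.


Section Ideal.
Variable N : {vspace V}.

Definition gens : seq V :=
  [seq G p.1 (mul (vbasis (fullv : {vspace V}))`_p.2.1 (vbasis N)`_p.2.2)
    | p : grade l r * ('I_(\dim (fullv : {vspace V})) * 'I_(\dim N))].
Definition Mv : {vspace V} := <<gens>>%VS.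

Lemma memM lam x y : y \in N -> G lam (mul x y) \in Mv.
Proof.
move=> Hy; rewrite (coord_vbasis (memvf x)) (coord_vbasis Hy).
rewrite mul_suml G_sumv; apply: rpred_sum => i _.
rewrite mulZl GZ; apply: memvZ.
rewrite mul_sumr G_sumv; apply: rpred_sum => j _.
rewrite mulZr GZ; apply: memvZ.
apply: memv_span; apply/mapP; exists (lam, (i, j)) => //; exact: mem_enum.
Qed.

Lemma gensP g : g \in gens -> exists lam x y, y \in N /\ g = G lam (mul x y).
Proof.
case/mapP => p _ ->; exists p.1, (vbasis fullv)`_p.2.1, (vbasis N)`_p.2.2.
split => //; rewrite -tnth_nth; exact: vbasis_mem (mem_tnth _ _).
Qed.

Lemma M_sub (f : V -> V) (U : {vspace V}) : linear f ->
  (forall g, g \in gens -> f g \in U) -> forall v, v \in Mv -> f v \in U.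
Proof.
move=> hf Hg v Hv; rewrite (coord_span (X := in_tuple gens) Hv) (lin_sum hf).
apply: rpred_sum => i _; rewrite (linZ hf); apply: memvZ; apply: Hg.
exact: mem_nth.
Qed.

Hypothesis HN : fa_graded S N.

Lemma key be al nu ka lam0 a b n : b \in Sp be -> a \in Sp al -> n \in Sp nu ->
  n \in N -> G lam0 (mul b (G ka (mul a n))) \in Mv.
Proof.
move=> Hb Ha Hn HnN.
have /vlineP [s ->] := skew ka Ha Hn.
rewrite mulZr GZ; apply: memvZ.
case AGc: (AG lam0 be nu al ka).
  rewrite (fa_FA4 Hn Hb Ha AGc); apply: rpred_sum => k _; apply: memvZ.
  have /vlineP [s' ->] := skew lam0 Hn (G_mem k (mul b a)).
  apply: memvZ; exact: memM.
move: AGc; rewrite AG_starG => /nandP [St|St].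
  by rewrite (G_FA3 Hn Ha St) mul0r G0 mem0v.
by rewrite (G_FA3 Hb (G_mem _ _) St) mem0v.
Qed.

Lemma gen_ideal a g : g \in gens -> mul a g \in Mv.
Proof.
case/gensP => ka [x [y [Hy ->]]].
rewrite -(G_sum (mul a _)); apply: rpred_sum => lam0 _.
rewrite -(G_sum a) mul_suml G_sumv; apply: rpred_sum => be _.
rewrite -(G_sum x) mul_suml G_sumv mul_sumr G_sumv; apply: rpred_sum => al _.
rewrite -(G_sum y) mul_sumr G_sumv mul_sumr G_sumv; apply: rpred_sum => nu _.
apply: (key ka lam0 (G_mem be a) (G_mem al x) (G_mem nu y)); exact: G_graded.
Qed.

Lemma M_ideal : fa_ideal S Mv.
Proof.
split; last first.
  move=> a m Hm; apply: (M_sub (fa_linr S a)) Hm => g; exact: gen_ideal.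
apply/eqP; rewrite eqEsubv; apply/andP; split.
  by apply/subv_sumP => lam _; exact: capvSl.
apply/span_subvP => g Hg; have [lam [x [y [Hy Eg]]]] := gensP Hg.
apply: (subvP (sumv_sup lam (P := xpredT) (U := (Mv :&: Sp lam)%VS) erefl (subvv _))).
by rewrite memv_cap Eg memM // G_mem.
Qed.

Lemma N_M : (N <= Mv)%VS.
Proof.
apply/subvP => n Hn; rewrite -(G_sum n); apply: rpred_sum => lam _.
by have := memM lam (fa_one S) Hn; rewrite fa_FA2_unitl.
Qed.

End Ideal.
End Framed.

Section Final.
Variables (R : realType) (l r : nat) (V : vectType R[i]) (S : framed_algebra R l r V).
Local Notation G := (gcomp (fa_sp S)).
Local Notation mul := (fa_mul S).
Local Notation Sp := (fa_sp S).
Variable d : {ffun 'I_l -> bool} * {ffun 'I_r -> bool}.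

Lemma A_S_dec w : w \in A_S S d -> forall mu,
  G mu w = if dpart mu == d then G mu w else 0.
Proof.
move=> /memv_sumP [ws wsP ->] mu.
rewrite big_mkcond /= G_uniq; last first.
  by move=> k; case: ifP => [/wsP //|_]; exact: mem0v.
by case: ifP.
Qed.

Definition Pf (v : V) : V := \sum_(lam | dpart lam == d) G lam v.

Lemma Pf_lin : linear Pf.
Proof.
move=> k u w; rewrite /Pf scaler_sumr -big_split; apply: eq_bigr => lam _.
by rewrite /gcomp linearP.
Qed.

Lemma Pf_id w : w \in A_S S d -> Pf w = w.
Proof.
move=> Hw; rewrite /Pf.
rewrite -{2}(G_sum S w) [in RHS](bigID (fun lam => dpart lam == d)) /=.
rewrite [X in _ = _ + X]big1 ?addr0 // => lam /negPf H.
by rewrite (A_S_dec Hw) H.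
Qed.

End Final.

Unset Implicit Arguments.

Theorem mainTheorem9 (R : realType) (l r : nat) (V : vectType R[i])
    (S : framed_algebra R l r V) :
  fa_simple S ->
  forall d : {ffun 'I_l -> bool} * {ffun 'I_r -> bool},
  in_D_S S d ->
  forall N : {vspace V},
    fa_graded S N ->
    (N <= A_S S d)%VS ->
    (forall a n, a \in A_S S (d0 l r) -> n \in N -> fa_mul S a n \in N) ->
    N = 0%VS \/ N = A_S S d.
Proof.
move=> simp d _ N HN HNd HNa.
have NM := N_M S N.
case: (simp _ (M_ideal HN)) => [M0|Mf].
  by left; apply/eqP; rewrite -subv0 -M0.
right; apply/eqP; rewrite eqEsubv HNd /=; apply/subvP => v Hv.
have Hm : v \in Mv S N by rewrite Mf memvf.
rewrite -(Pf_id Hv); move: Hm; apply: (M_sub (Pf_lin S d)).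
move=> g /gensP [ka [x [y [Hy ->]]]].
rewrite /Pf; apply: rpred_sum => lam Hlam.
rewrite (G_in _ (G_mem _ _ _)); case: eqP => [E|_]; last exact: mem0v.
subst lam.
rewrite -(G_sum S x) -(G_sum S y) mul_suml G_sumv; apply: rpred_sum => al _.
rewrite mul_sumr G_sumv; apply: rpred_sum => nu _.
have HyA : y \in A_S S d by apply: (subvP HNd).
case: (eqVneq (dpart nu) d) => Hnu; last first.
  by rewrite (A_S_dec HyA) (negPf Hnu) mul0r G0 mem0v.
case St: (starG al nu ka); last by rewrite (G_FA3 (G_mem _ _ _) (G_mem _ _ _)) ?St // mem0v.
have Hal : dpart al = d0 l r.
  by apply: (starG_xor St); rewrite Hnu; exact/eqP.
apply: G_graded => //; apply: HNa; last exact: G_graded.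
apply: (subvP (sumv_sup al (P := fun lam => dpart lam == d0 l r) _ (subvv _))).
  by rewrite Hal.
exact: G_mem.
Qed.
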